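(* Let $P$ be a section of width three. The following are equivalent: (1) $P$ is nice; (2) $P$ contains no retractable point; (3) $P$ contains no irreducible point.
   Context: All posets are finite. Level sets: $P(0)=\min P$, $P(k+1)=\min(P\setminus\bigcup_{i\le k}P(i))$. A section of width three is a poset $P$ of height $h_P\ge1$ with carrier $\{c_{k,j}:k\in[0,h_P],j\in\{0,1,2\}\}$ such that: $c_{0,j}<\dots<c_{h_P,j}$ is a chain for each $j$; each $\{c_{k,0},c_{k,1},c_{k,2}\}$ is an antichain; $c_{k,i}<c_{\ell,j}\Rightarrow c_{k,i+1}<c_{\ell,j+1}$ for all $k,\ell,i,j$ (indices mod 3); and for no $k$ is every point of $P(k)$ below every point of $P(k+1)$. It is nice if for all $x<y$ in $P$: $\{z:z>x\}\not\subseteq\{z:z\ge y\}$ and $\{z:z<y\}\not\subseteq\{z:z\le x\}$. A point $a\in P$ is retractable if $P\setminus\{a\}$ is a retract of $P$ (image of an idempotent order-preserving self-map). A point is irreducible if it has exactly one lower cover or exactly one upper cover. *)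

(* Defs.v *)
From mathcomp Require Import all_boot.
Set Implicit Arguments. Unset Strict Implicit. Unset Printing Implicit Defensive.

Section Posets.
Variables (T : finType) (le : rel T).

Definition lt (x y : T) : bool := (x != y) && le x y.

Definition is_partial_order : Prop :=
  [/\ forall x, le x x,
      forall x y, le x y -> le y x -> x = y
    & forall x y z, le x y -> le y z -> le x z].

Definition minimals (S : {set T}) : {set T} :=
  [set x in S | [forall y in S, ~~ lt y x]].

Fixpoint rest (n : nat) : {set T} :=
  match n with
  | 0 => setT
  | n'.+1 => rest n' :\: minimals (rest n')
  end.

(* level sets: P(0) = min P, P(k+1) = min (P \ U_{i<=k} P(i)) *)
Definition level (k : nat) : {set T} := minimals (rest k).

Definition nice : Prop :=
  forall x y, lt x y ->
    (exists z, lt x z /\ ~~ le y z) /\ (exists z, lt z y /\ ~~ le z x).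

(* P \ {a} is a retract of P: image of an idempotent order-preserving map *)
Definition retractable (a : T) : Prop :=
  exists f : T -> T,
    [/\ forall x y, le x y -> le (f x) (f y),
        forall x, f (f x) = f x
      & forall y, (exists x, f x = y) <-> y != a].

Definition covers (y x : T) : bool :=
  lt x y && [forall z, ~~ (lt x z && lt z y)].

Definition lower_covers (x : T) : {set T} := [set y | covers x y].
Definition upper_covers (x : T) : {set T} := [set y | covers y x].

Definition irreducible (a : T) : Prop :=
  #|lower_covers a| = 1 \/ #|upper_covers a| = 1.

End Posets.

(* A section of width three of height h: carrier is the set of pairs
   c_{k,j} = (k, j) with k in [0,h], j in {0,1,2}; the order is [le]. *)
Definition section3 (h : nat) (le : rel ('I_h.+1 * 'I_3)) : Prop :=
  (1 <= h) /\ is_partial_order le /\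
  [/\
      forall (j : 'I_3) (k l : 'I_h.+1), k < l -> lt le (k, j) (l, j),
      forall (k : 'I_h.+1) (i j : 'I_3), i != j -> ~~ le (k, i) (k, j),
      forall (k l : 'I_h.+1) (i j : 'I_3),
        lt le (k, i) (l, j) -> lt le (k, ordS i) (l, ordS j)
    &
      forall k : nat, level le k.+1 != set0 ->
        ~ (forall x y, x \in level le k -> y \in level le k.+1 -> lt le x y)].

(* Main.v *)
Require Import Defs.
From mathcomp Require Import all_boot.
From mathcomp Require Import all_algebra ring.
Set Implicit Arguments. Unset Strict Implicit. Unset Printing Implicit Defensive.

Section Z3.
Import GRing.Theory.
Local Open Scope ring_scope.

Lemma ordS_add1 (x : 'I_3) : ordS x = x + 1.
Proof. apply/val_inj => /=. by rewrite modnDmr addn1. Qed.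

Lemma z3_cases : forall x y d : 'I_3, d != 0 -> [|| y == x, y == x + d | y == x + d + d].
Proof. by do 3! case=> [[|[|[|//]]] ?]. Qed.

Lemma rot_nat (R : 'I_3 -> 'I_3 -> Prop) :
  (forall p r, R p r -> R (ordS p) (ordS r)) ->
  forall n p r, R p r -> R (p + n%:R) (r + n%:R).
Proof.
move=> H; elim=> [|n IH] p r Hpr; first by rewrite !addr0.
by rewrite -!natr1 !addrA -!ordS_add1; apply: H; apply: IH.
Qed.

Lemma rot_any (R : 'I_3 -> 'I_3 -> Prop) :
  (forall p r, R p r -> R (ordS p) (ordS r)) ->
  forall (s : 'I_3) p r, R p r -> R (p + s) (r + s).
Proof. move=> H s p r Hpr; rewrite -(natr_Zp s); exact: rot_nat. Qed.

Lemma all_of (R : 'I_3 -> 'I_3 -> Prop) (d : 'I_3) : d != 0 ->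
  (forall p, R p p) -> (forall p r, R p r -> R p (r + d)) -> forall p r, R p r.
Proof.
move=> dn0 H1 H2 p r.
case/or3P: (z3_cases p r dn0) => /eqP ->; [exact: H1| exact: H2 | exact/H2/H2].
Qed.

Lemma shift_right (R : 'I_3 -> 'I_3 -> Prop) (i q : 'I_3) :
  (forall p r, R p r -> R (ordS p) (ordS r)) ->
  (forall p, R p i -> R p q) -> forall p r, R p r -> R p (r + (q - i)).
Proof.
move=> Hrot H p r Hpr.
have := rot_any Hrot (i - r) Hpr.
have -> : r + (i - r) = i by ring.
move/H => /(rot_any Hrot (r - i)).
have -> : p + (i - r) + (r - i) = p by ring.
by have -> : q + (r - i) = r + (q - i) by ring.
Qed.

Lemma shift_left (R : 'I_3 -> 'I_3 -> Prop) (i q : 'I_3) :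
  (forall p r, R p r -> R (ordS p) (ordS r)) ->
  (forall r, R i r -> R q r) -> forall p r, R p r -> R p (r + (i - q)).
Proof.
move=> Hrot H p r Hpr.
have := rot_any Hrot (i - p) Hpr.
have -> : p + (i - p) = i by ring.
move/H => /(rot_any Hrot (p - q)).
have -> : q + (p - q) = p by ring.
by have -> : r + (i - p) + (p - q) = r + (i - q) by ring.
Qed.

Lemma neq_sub (i q : 'I_3) : i != q -> q - i != 0.
Proof. by rewrite subr_eq0 eq_sym. Qed.

End Z3.

Section General.
Variables (T : finType) (le : rel T).
Hypothesis (Hpo : is_partial_order le).

Lemma refl x : le x x. Proof. by case: Hpo. Qed.
Lemma antis x y : le x y -> le y x -> x = y. Proof. by case: Hpo => _ H _; apply: H. Qed.
Lemma trans x y z : le x y -> le y z -> le x z. Proof. by case: Hpo => _ _ H; apply: H. Qed.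

Lemma ltW x y : lt le x y -> le x y. Proof. by case/andP. Qed.
Lemma lt_neq x y : lt le x y -> x != y. Proof. by case/andP. Qed.

Lemma lt_trans x y z : lt le x y -> lt le y z -> lt le x z.
Proof.
move=> /andP[nxy lxy] /andP[nyz lyz]; apply/andP; split; last exact: trans lyz.
apply/eqP=> exz; subst z; by rewrite (antis lxy lyz) eqxx in nxy.
Qed.

Lemma lt_le_trans x y z : lt le x y -> le y z -> lt le x z.
Proof.
move=> Hxy Hyz; case: (eqVneq y z) => [<-//|nyz]; apply: lt_trans Hxy _.
by rewrite /lt nyz.
Qed.

Lemma cover_below a : forall n z, #|[set w | lt le z w && lt le w a]| <= n ->
  lt le z a -> exists c, le z c /\ covers le a c.
Proof.
elim=> [|n IH] z Hc Hza.
  exists z; split; first exact: refl.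
  rewrite /covers Hza /=; apply/forallP => w; apply/negP => Hw.
  by move: Hc; rewrite leqn0 => /eqP/cards0_eq/setP/(_ w); rewrite !inE Hw.
case: (boolP [forall w, ~~ (lt le z w && lt le w a)]) => Hf.
  by exists z; split; [exact: refl| rewrite /covers Hza].
move/forallPn: Hf => [w]; rewrite negbK => /andP[Hzw Hwa].
have [c [Hwc Hc']] : exists c, le w c /\ covers le a c.
  apply: (IH w _ Hwa); rewrite -ltnS; apply: leq_trans Hc.
  apply: proper_card; apply/properP; split.
    by apply/subsetP => v; rewrite !inE => /andP[H1 ->]; rewrite (lt_trans Hzw H1).
  exists w; first by rewrite !inE Hzw Hwa.
  by rewrite !inE /lt eqxx.
by exists c; split=> //; apply: trans (ltW Hzw) Hwc.
Qed.

Lemma cover_above a : forall n z, #|[set w | lt le a w && lt le w z]| <= n ->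
  lt le a z -> exists c, le c z /\ covers le c a.
Proof.
elim=> [|n IH] z Hc Hza.
  exists z; split; first exact: refl.
  rewrite /covers Hza /=; apply/forallP => w; apply/negP => Hw.
  by move: Hc; rewrite leqn0 => /eqP/cards0_eq/setP/(_ w); rewrite !inE Hw.
case: (boolP [forall w, ~~ (lt le a w && lt le w z)]) => Hf.
  by exists z; split; [exact: refl| rewrite /covers Hza].
move/forallPn: Hf => [w]; rewrite negbK => /andP[Haw Hwz].
have [c [Hwc Hc']] : exists c, le c w /\ covers le c a.
  apply: (IH w _ Haw); rewrite -ltnS; apply: leq_trans Hc.
  apply: proper_card; apply/properP; split.
    by apply/subsetP => v; rewrite !inE => /andP[-> H1]; rewrite (lt_trans H1 Hwz).
  exists w; first by rewrite !inE Hwz Haw.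
  by rewrite !inE /lt eqxx andbF.
by exists c; split=> //; apply: trans Hwc (ltW Hwz).
Qed.

Lemma nice_no_irr : nice le -> forall a, ~ irreducible le a.
Proof.
move=> Hn a [/eqP/cards1P [b Hb] | /eqP/cards1P [b Hb]].
  have : b \in lower_covers le a by rewrite Hb set11.
  rewrite inE => /andP[Hba _].
  have [_ [z [Hza Hzb]]] := Hn _ _ Hba.
  have [c [Hzc Hc]] := cover_below (leqnn _) Hza.
  have : c \in lower_covers le a by rewrite inE.
  by rewrite Hb inE => /eqP Ec; subst c; rewrite Hzc in Hzb.
have : b \in upper_covers le a by rewrite Hb set11.
rewrite inE => /andP[Hab _].
have [[z [Haz Hbz]] _] := Hn _ _ Hab.
have [c [Hcz Hc]] := cover_above (leqnn _) Haz.
have : c \in upper_covers le a by rewrite inE.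
by rewrite Hb inE => /eqP Ec; subst c; rewrite Hcz in Hbz.
Qed.

Lemma no_retr_nice : (forall a, ~ retractable le a) -> nice le.
Proof.
move=> Hr x y Hxy; split.
  case: (boolP [exists z, lt le x z && ~~ le y z]).
    by move/existsP => [z /andP[H1 H2]]; exists z.
  move/existsPn => Hz; exfalso; apply: (Hr x).
  have Hyz : forall z, lt le x z -> le y z.
    by move=> z Hxz; have := Hz z; rewrite Hxz /= negbK.
  have nxy := lt_neq Hxy.
  exists (fun t => if t == x then y else t); split.
  - move=> s t Hst; case: (eqVneq s x) => [Es|Ns]; case: (eqVneq t x) => [Et|Nt].
    + exact: refl.
    + subst s; apply: Hyz; by rewrite /lt eq_sym Nt.
    + subst t; exact: trans Hst (ltW Hxy).
    + exact: Hst.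
  - move=> t; case: (eqVneq t x) => [_|Nt]; first by rewrite eq_sym (negPf nxy).
    by rewrite (negPf Nt).
  - move=> y'; split.
      move=> [t <-]; case: (eqVneq t x) => [_|Nt] //; by rewrite eq_sym.
    by move=> Ny; exists y'; rewrite (negPf Ny).
case: (boolP [exists z, lt le z y && ~~ le z x]).
  by move/existsP => [z /andP[H1 H2]]; exists z.
move/existsPn => Hz; exfalso; apply: (Hr y).
have Hzx : forall z, lt le z y -> le z x.
  by move=> z Hzy; have := Hz z; rewrite Hzy /= negbK.
have nxy := lt_neq Hxy.
exists (fun t => if t == y then x else t); split.
- move=> s t Hst; case: (eqVneq s y) => [Es|Ns]; case: (eqVneq t y) => [Et|Nt].
  + exact: refl.
  + subst s; exact: trans (ltW Hxy) Hst.
  + subst t; apply: Hzx; by rewrite /lt Ns.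
  + exact: Hst.
- move=> t; case: (eqVneq t y) => [_|Nt]; first by rewrite (negPf nxy).
  by rewrite (negPf Nt).
- move=> y'; split.
    move=> [t <-]; case: (eqVneq t y) => [_|Nt] //.
  by move=> Ny; exists y'; rewrite (negPf Ny).
Qed.

Lemma retr_up a b : le a b -> a != b -> (forall y, lt le a y -> le b y) ->
  #|upper_covers le a| = 1.
Proof.
move=> Hab nab Hup; apply/eqP/cards1P; exists b; apply/setP => y; rewrite !inE.
have Lab : lt le a b by rewrite /lt nab.
apply/idP/eqP.
  move=> /andP[Hay /forallP Hc]; case: (eqVneq y b) => // Nyb.
  by have := Hc b; rewrite Lab /= /lt (Hup _ Hay) andbT eq_sym Nyb.
move=> ->; rewrite /covers Lab /=; apply/forallP => z; apply/negP => /andP[Haz Hzb].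
have := Hup _ Haz => Hbz.
by move: Hzb; rewrite /lt => /andP[nzb Hzb']; rewrite (antis Hzb' Hbz) eqxx in nzb.
Qed.

Lemma retr_down a b : le b a -> a != b -> (forall x, lt le x a -> le x b) ->
  #|lower_covers le a| = 1.
Proof.
move=> Hba nab Hdn; apply/eqP/cards1P; exists b; apply/setP => y; rewrite !inE.
have Lba : lt le b a by rewrite /lt eq_sym nab.
apply/idP/eqP.
  move=> /andP[Hya /forallP Hc]; case: (eqVneq y b) => // Nyb.
  by have := Hc b; rewrite Lba andbT /= /lt (Hdn _ Hya) andbT Nyb.
move=> ->; rewrite /covers Lba /=; apply/forallP => z; apply/negP => /andP[Hbz Hza].
have := Hdn _ Hza => Hzb.
by move: Hbz; rewrite /lt => /andP[nbz Hbz']; rewrite (antis Hbz' Hzb) eqxx in nbz.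
Qed.

End General.

From mathcomp Require Import zify.

Section Sec3.
Variables (h : nat) (le : rel ('I_h.+1 * 'I_3)).
Hypothesis Hs : section3 le.

Let Hpo : is_partial_order le. Proof. by case: Hs => _ []. Qed.
Let Hh : 1 <= h. Proof. by case: Hs. Qed.
Let Hch : forall (j : 'I_3) (k l : 'I_h.+1), k < l -> lt le (k, j) (l, j).
Proof. by case: Hs => _ [] _ []. Qed.
Let Hanti : forall (k : 'I_h.+1) (i j : 'I_3), i != j -> ~~ le (k, i) (k, j).
Proof. by case: Hs => _ [] _ []. Qed.
Let Hrot : forall (k l : 'I_h.+1) (i j : 'I_3),
        lt le (k, i) (l, j) -> lt le (k, ordS i) (l, ordS j).
Proof. by case: Hs => _ [] _ []. Qed.
Let Hlev : forall k : nat, level le k.+1 != set0 ->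
        ~ (forall x y, x \in level le k -> y \in level le k.+1 -> lt le x y).
Proof. by case: Hs => _ [] _ []. Qed.

Lemma no_lt_row (k : 'I_h.+1) i j : ~~ lt le (k, i) (k, j).
Proof.
case: (eqVneq i j) => [->|nij]; first by rewrite /lt eqxx.
apply/negP => /ltW; apply/negP; exact: Hanti.
Qed.

Lemma lt_row x y : lt le x y -> x.1 < y.1.
Proof.
case: x y => [k i] [l j] /= Hxy; rewrite ltnNge; apply/negP => Hlk.
case: (ltngtP l k) Hlk => // [Hl|Hl] _.
  have := lt_trans Hpo (Hch i Hl) Hxy; by rewrite (negPf (no_lt_row _ _ _)).
have E : l = k by apply/val_inj.
by subst l; rewrite (negPf (no_lt_row _ _ _)) in Hxy.
Qed.

Lemma minimals_row k : minimals le [set x : 'I_h.+1 * 'I_3 | k <= x.1] = [set x : 'I_h.+1 * 'I_3 | x.1 == k :> nat].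
Proof.
apply/setP => [[x1 x2]]; rewrite !inE /=.
case: (ltngtP k x1) => Hk.
- rewrite /=; apply/negbTE.
  apply/forallPn; exists (inord k, x2); rewrite inE /= inordK ?leqnn /=;
    last by apply: ltn_trans Hk _.
  rewrite negbK; apply: Hch; rewrite /= inordK //; by apply: ltn_trans Hk _.
- by [].
- subst k; rewrite /=; apply/forallP => y; apply/implyP; rewrite inE => Hy.
  by apply/negP => /lt_row /=; rewrite ltnNge Hy.
Qed.

Lemma rest_row k : rest le k = [set x : 'I_h.+1 * 'I_3 | k <= x.1].
Proof.
elim: k => [|k IH]; first by apply/setP => x; rewrite !inE.
rewrite /= IH minimals_row; apply/setP => x; rewrite !inE.
by rewrite ltn_neqAle eq_sym.
Qed.

Lemma level_row k : level le k = [set x : 'I_h.+1 * 'I_3 | x.1 == k :> nat].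
Proof. by rewrite /level rest_row minimals_row. Qed.

Lemma no_full (u v : 'I_h.+1) : v = u.+1 :> nat -> ~ (forall p r, lt le (u,p) (v,r)).
Proof.
move=> Euv Hall; apply: (Hlev (k := u)).
  by apply/set0Pn; exists (v, ord0); rewrite level_row inE /= Euv.
move=> [x1 x2] [y1 y2]; rewrite !level_row !inE /= => /eqP e1 /eqP e2.
have -> : x1 = u by apply/val_inj.
have -> : y1 = v by apply/val_inj; rewrite /= e2 Euv.
exact: Hall.
Qed.

Lemma incomp_false (ka : 'I_h.+1) ia kb ib : (kb,ib) != (ka,ia) ->
  ~~ le (ka,ia) (kb,ib) -> ~~ le (kb,ib) (ka,ia) ->
  (forall x, lt le x (ka,ia) -> le x (kb,ib)) ->
  (forall y, lt le (ka,ia) y -> le (kb,ib) y) -> False.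
Proof.
move=> nba Nab Nba HA HB.
have HA' : forall x, lt le x (ka,ia) -> lt le x (kb,ib).
  move=> x Hx; apply/andP; split; last exact: HA.
  by apply/eqP => E; move: Hx; rewrite E => /ltW; rewrite (negPf Nba).
have HB' : forall y, lt le (ka,ia) y -> lt le (kb,ib) y.
  move=> y Hy; apply/andP; split; last exact: HB.
  by apply/eqP => E; move: Hy; rewrite -E => /ltW; rewrite (negPf Nab).
case: (posnP ka) => [ka0 | kapos].
- have h1 : 1 < h.+1 by [].
  pose w : 'I_h.+1 := Ordinal h1.
  have Hw : lt le (ka,ia) (w,ia) by apply: Hch; rewrite ka0.
  have kb0 := lt_row (HB' _ Hw); rewrite /= in kb0.
  have Ekb : kb = ka by apply/val_inj => /=; lia.
  subst kb.
  have nib : ib != ia by apply: contraNneq nba => ->.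
  apply: (@no_full ka w); first by rewrite /= ka0.
  apply: (@all_of (fun p r => lt le (ka,p) (w,r)) (ia - ib)%R).
  + exact: neq_sub.
  + by move=> p; apply: Hch; rewrite /= ka0.
  + apply: shift_left; first by move=> p r; apply: Hrot.
    by move=> r Hr; apply: HB'.
- have Hu : nat_of_ord (inord ka.-1 : 'I_h.+1) = ka.-1.
    by rewrite inordK //; apply: leq_ltn_trans (leq_pred ka) (ltn_ord ka).
  pose u : 'I_h.+1 := inord ka.-1.
  have Hua : u < ka by rewrite /u Hu; lia.
  have Hukb := lt_row (HA' _ (Hch ia Hua)); rewrite /= in Hukb.
  have Hkb : kb <= ka.
    case: (ltnP ka h) => Hkh.
      have Hw : nat_of_ord (inord ka.+1 : 'I_h.+1) = ka.+1 by rewrite inordK.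
      have Hlt : ka < (inord ka.+1 : 'I_h.+1) by rewrite Hw.
      have := lt_row (HB' _ (Hch ia Hlt)); rewrite /= Hw; lia.
    by apply: leq_trans Hkh; rewrite -ltnS.
  have Ekb : kb = ka by apply/val_inj => /=; rewrite /u Hu in Hukb; lia.
  subst kb.
  have nib : ia != ib by apply: contraNneq nba => ->.
  apply: (@no_full u ka); first by rewrite /u Hu; lia.
  apply: (@all_of (fun p r => lt le (u,p) (ka,r)) (ib - ia)%R).
  + exact: neq_sub.
  + by move=> p; apply: Hch.
  + apply: shift_right; first by move=> p r; apply: Hrot.
    by move=> p Hp; apply: HA'.
Qed.

Lemma retr_irr a : retractable le a -> irreducible le a.
Proof.
move=> [f [Hmono Hidem Himg]].
have Hfix : forall x, x != a -> f x = x.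
  by move=> x /(Himg x).2 [t <-]; apply: Hidem.
have nba : f a != a by apply/(Himg (f a)).1; exists a.
have HA : forall x, lt le x a -> le x (f a).
  by move=> x /andP[nxa Hxa]; rewrite -(Hfix x nxa); apply: Hmono.
have HB : forall y, lt le a y -> le (f a) y.
  move=> y /andP[nay Hay]; rewrite -(Hfix y); first by apply: Hmono.
  by rewrite eq_sym.
case: (boolP (le a (f a))) => Hab.
  by right; apply: (retr_up Hpo Hab) => //; rewrite eq_sym.
case: (boolP (le (f a) a)) => Hba.
  by left; apply: (retr_down Hpo Hba) => //; rewrite eq_sym.
exfalso; move: nba Hab Hba HA HB.
case: (f a) => [kb ib]; case: a {Hfix Himg} => [ka ia].
exact: incomp_false.
Qed.

End Sec3.

Theorem proposition3p3 (h : nat) (le : rel ('I_h.+1 * 'I_3)) :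
  section3 le ->
  (nice le <-> (forall a, ~ retractable le a)) /\
  ((forall a, ~ retractable le a) <-> (forall a, ~ irreducible le a)).
Proof.
move=> Hs; have Hpo : is_partial_order le by case: Hs => _ [].
split; split.
- by move=> Hn a Hr; apply: (nice_no_irr Hpo Hn) (retr_irr Hs Hr).
- exact: no_retr_nice.
- by move=> H; apply: (nice_no_irr Hpo); apply: no_retr_nice.
- by move=> H a Hr; apply: (H a) (retr_irr Hs Hr).
Qed.
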